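(* Let $\lambda$ be a nonzero real number. For every integer $n\ge 0$, $$\sum_{k=0}^{n}S_{2,\lambda}(n,k)\,2^{-k}(-1)^{k}k!=W_{n,\lambda}\!\left(-\tfrac{1}{2}\right)=\frac{2}{n+1}\Big(\beta_{n+1,\lambda}-2^{n+1}\beta_{n+1,\frac{\lambda}{2}}\Big).$$
   Context: For nonzero $\lambda\in\mathbb{R}$, $e_{\lambda}(t)=(1+\lambda t)^{1/\lambda}$; $(x)_{0,\lambda}=1$, $(x)_{n,\lambda}=x(x-\lambda)\cdots(x-(n-1)\lambda)$ for $n\ge1$; $(x)_0=1$, $(x)_n=x(x-1)\cdots(x-n+1)$. The degenerate Stirling numbers of the second kind $S_{2,\lambda}(n,k)$ are defined by $(x)_{n,\lambda}=\sum_{k=0}^{n}S_{2,\lambda}(n,k)(x)_{k}$. The degenerate geometric polynomials are $W_{n,\lambda}(x)=\sum_{k=0}^{n}S_{2,\lambda}(n,k)\,k!\,x^{k}$. The Carlitz degenerate Bernoulli numbers $\beta_{n,\mu}$ (for nonzero $\mu$) are defined by $\frac{t}{e_{\mu}(t)-1}=\sum_{n=0}^{\infty}\beta_{n,\mu}\frac{t^{n}}{n!}$. *)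

(* Defs.v *)
From Stdlib Require Import Reals Arith Factorial.
From Coquelicot Require Import Coquelicot.
Open Scope R_scope.

Fixpoint dfall (lam x : R) (n : nat) : R :=
  match n with
  | O => 1
  | S m => dfall lam x m * (x - INR m * lam)
  end.

Definition falling (x : R) (n : nat) : R := dfall 1 x n.

Definition e_deg (lam t : R) : R := Rpower (1 + lam * t) (/ lam).

(* S is the table of degenerate Stirling numbers of the second kind:
   (x)_{n,lam} = sum_{k=0}^n S n k (x)_k for all real x and all n.
   (Uniquely determines S n k for k <= n.) *)
Definition is_deg_stirling2 (lam : R) (S : nat -> nat -> R) : Prop :=
  forall (n : nat) (x : R),
    dfall lam x n = sum_f_R0 (fun k => S n k * falling x k) n.

Definition W_deg (S : nat -> nat -> R) (n : nat) (x : R) : R :=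
  sum_f_R0 (fun k => S n k * INR (fact k) * x ^ k) n.

Definition is_carlitz_bernoulli (mu : R) (b : nat -> R) : Prop :=
  exists delta : R, 0 < delta /\
    forall t : R, 0 < Rabs t < delta ->
      is_pseries (fun n => b n / INR (fact n)) t (t / (e_deg mu t - 1)).

(* Main.v *)
Require Import Defs.
From Stdlib Require Import Reals Arith Factorial Lra Lia.
From Coquelicot Require Import Coquelicot.
Open Scope R_scope.

Lemma ex_radius (a : nat -> R) x : ex_pseries a x -> Rbar_le (Rabs x) (CV_radius a).
Proof.
intros H. apply Rbar_not_lt_le. intros Hlt.
apply (CV_disk_outside a x Hlt).
apply ex_series_lim_0.
destruct H as [l Hl]. exists l.
apply is_pseries_R in Hl. revert Hl. apply is_series_ext. intros n. reflexivity.
Qed.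

Lemma ps_unique (q : nat -> R) d : 0 < d ->
  (forall t, 0 < Rabs t < d -> is_pseries q t 0) -> forall n, q n = 0.
Proof.
intros Hd H n.
assert (Hr : Rbar_lt 0 (CV_radius q)).
{ apply Rbar_lt_le_trans with (Rabs (d/2)).
  - simpl. rewrite Rabs_pos_eq; lra.
  - apply ex_radius. eexists. apply H. rewrite Rabs_pos_eq; lra. }
assert (H0 : PSeries q 0 = 0).
{ assert (L1 : is_lim (PSeries q) 0 (PSeries q 0)).
  { apply is_lim_continuity. apply PSeries_continuity. rewrite Rabs_R0. exact Hr. }
  assert (L2 : is_lim (PSeries q) 0 0).
  { apply is_lim_ext_loc with (fun _ => 0).
    - exists (mkposreal d Hd). intros y Hy Hy0. symmetry. apply is_pseries_unique. apply H.
      split. apply Rabs_pos_lt. exact Hy0.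
      unfold ball in Hy. simpl in Hy. unfold AbsRing_ball, abs, minus, plus, opp in Hy. simpl in Hy.
      rewrite Ropp_0, Rplus_0_r in Hy. exact Hy.
    - apply is_lim_const. }
  apply is_lim_unique in L1. apply is_lim_unique in L2. rewrite L1 in L2. 
  injection L2. auto. }
change 0 with ((fun _ : nat => 0) n).
apply PSeries_ext_recip.
- exact Hr.
- rewrite CV_radius_const_0. simpl. exact I.
- exists (mkposreal d Hd). intros y Hy. rewrite PSeries_const_0.
  destruct (Req_dec y 0) as [->|Hy0]. exact H0.
  apply is_pseries_unique. apply H. split. apply Rabs_pos_lt. exact Hy0.
  unfold ball in Hy. simpl in Hy. unfold AbsRing_ball, abs, minus, plus, opp in Hy. simpl in Hy.
  rewrite Ropp_0, Rplus_0_r in Hy. exact Hy.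
Qed.

Definition ea lam n := dfall lam 1 n / INR (fact n).

Lemma dfall_bound lam n : Rabs (dfall lam 1 n) <= INR (fact n) * (1 + Rabs lam)^n.
Proof.
induction n as [|n IH].
- simpl. rewrite Rabs_R1. lra.
- simpl dfall. rewrite Rabs_mult. rewrite fact_simpl, mult_INR, S_INR. simpl pow.
  assert (H1 : Rabs (1 - INR n * lam) <= (INR n + 1) * (1 + Rabs lam)).
  { apply Rle_trans with (1 + INR n * Rabs lam).
    - unfold Rminus. eapply Rle_trans. apply Rabs_triang. rewrite Rabs_R1, Rabs_Ropp, Rabs_mult.
      rewrite (Rabs_pos_eq (INR n)) by apply pos_INR. lra.
    - assert (0 <= INR n) by apply pos_INR. assert (0 <= Rabs lam) by apply Rabs_pos. nra. }
  assert (0 <= Rabs (dfall lam 1 n)) by apply Rabs_pos.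
  assert (0 <= Rabs (1 - INR n * lam)) by apply Rabs_pos.
  assert (0 <= INR n) by apply pos_INR.
  assert (0 <= Rabs lam) by apply Rabs_pos.
  assert (0 <= INR (fact n) * (1 + Rabs lam) ^ n).
  { apply Rmult_le_pos. apply pos_INR. apply pow_le. lra. }
  apply Rle_trans with (INR (fact n) * (1 + Rabs lam) ^ n * ((INR n + 1) * (1 + Rabs lam))).
  + apply Rmult_le_compat; assumption.
  + lra.
Qed.

Lemma ea_radius lam : Rbar_le (/(1+Rabs lam)) (CV_radius (ea lam)).
Proof.
destruct (CV_radius_bounded (ea lam)) as [Hub _].
apply Hub. exists 1. intros n.
assert (HM : 0 < 1 + Rabs lam) by (pose proof (Rabs_pos lam); lra).
assert (Hf : 0 < INR (fact n)) by (apply lt_0_INR, lt_O_fact).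
assert (Hp : 0 < (1 + Rabs lam) ^ n) by (apply pow_lt; lra).
pose proof (dfall_bound lam n) as Hb.
assert (E : Rabs (ea lam n * (/ (1 + Rabs lam)) ^ n) = Rabs (dfall lam 1 n) * / (INR (fact n) * (1 + Rabs lam) ^ n)).
{ unfold ea, Rdiv. rewrite <- Rinv_pow by lra.
  rewrite Rabs_mult, Rabs_mult, Rabs_inv, Rabs_inv.
  rewrite (Rabs_pos_eq (INR (fact n))) by lra.
  rewrite (Rabs_pos_eq ((1 + Rabs lam) ^ n)) by lra.
  field. split; lra. }
rewrite E.
apply Rmult_le_reg_r with (INR (fact n) * (1 + Rabs lam) ^ n). nra.
rewrite Rmult_assoc, Rinv_l by nra. lra.
Qed.

Lemma ea_rec lam n : INR (S n) * ea lam (S n) = ea lam n * (1 - INR n * lam).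
Proof.
unfold ea. simpl dfall. rewrite fact_simpl, mult_INR.
assert (Hf : 0 < INR (fact n)) by (apply lt_0_INR, lt_O_fact).
assert (Hs : 0 < INR (S n)) by (apply lt_0_INR; lia).
field. split; lra.
Qed.

Lemma ea_ode lam t : lam <> 0 -> Rbar_lt (Rabs t) (CV_radius (ea lam)) ->
  PSeries (PS_derive (ea lam)) t * (1 + lam * t) = PSeries (ea lam) t.
Proof.
intros Hl Ht.
rewrite Rmult_plus_distr_l, Rmult_1_r.
replace (PSeries (PS_derive (ea lam)) t * (lam * t))
  with (PSeries (PS_scal lam (PS_incr_1 (PS_derive (ea lam)))) t)
  by (rewrite PSeries_scal, PSeries_incr_1; ring).
rewrite <- PSeries_plus.
- apply PSeries_ext. intros [|n].
  + change (INR 1 * ea lam 1 + lam * 0 = ea lam 0).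
    pose proof (ea_rec lam 0) as E. rewrite E. simpl INR. ring.
  + change (INR (S (S n)) * ea lam (S (S n)) + lam * (INR (S n) * ea lam (S n)) = ea lam (S n)).
    pose proof (ea_rec lam (S n)) as E1.
    rewrite E1, S_INR. ring.
- apply CV_radius_inside. rewrite CV_radius_derive. exact Ht.
- apply CV_radius_inside. rewrite CV_radius_scal by exact Hl.
  rewrite CV_radius_incr_1, CV_radius_derive. exact Ht.
Qed.

Lemma ea_exp lam t : lam <> 0 -> Rabs t < /(1 + Rabs lam) -> PSeries (ea lam) t = e_deg lam t.
Proof.
intros Hl Ht.
assert (HM : 0 < 1 + Rabs lam) by (pose proof (Rabs_pos lam); lra).
assert (Hin : forall u, Rabs u < /(1 + Rabs lam) -> Rbar_lt (Rabs u) (CV_radius (ea lam))).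
{ intros u Hu. eapply Rbar_lt_le_trans; [|apply ea_radius]. exact Hu. }
assert (Hpos : forall u, Rabs u < /(1 + Rabs lam) -> 0 < 1 + lam * u).
{ intros u Hu.
  assert (H1 : Rabs (lam * u) < 1).
  { rewrite Rabs_mult.
    assert (Rabs lam * Rabs u <= Rabs lam * /(1 + Rabs lam)).
    { apply Rmult_le_compat_l. apply Rabs_pos. lra. }
    assert (Rabs lam * /(1 + Rabs lam) < 1).
    { apply Rmult_lt_reg_r with (1 + Rabs lam). lra.
      rewrite Rmult_assoc, Rinv_l by lra. lra. }
    lra. }
  pose proof (Rle_abs (- (lam * u))). rewrite Rabs_Ropp in H. lra. }
set (G := fun u => PSeries (ea lam) u * exp (- / lam * ln (1 + lam * u))).
assert (HG : forall u, Rabs u < /(1 + Rabs lam) -> is_derive G u 0).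
{ intros u Hu. unfold G. auto_derive.
  - split. apply ex_derive_PSeries. apply Hin. exact Hu.
    split. apply Hpos. exact Hu. auto.
  - rewrite Derive_PSeries by (apply Hin; exact Hu).
    pose proof (ea_ode lam u Hl (Hin u Hu)) as E.
    pose proof (Hpos u Hu).
    rewrite <- E. field. split; lra. }
assert (G0 : G 0 = 1).
{ unfold G. rewrite PSeries_0, Rmult_0_r, Rplus_0_r, ln_1, Rmult_0_r, exp_0.
  unfold ea. simpl. field. }
assert (Gt : G t = 1).
{ destruct (Rtotal_order t 0) as [Hneg|[Heq|Hposi]].
  - rewrite <- G0. apply eq_is_derive; [|lra]. intros s Hs. apply HG.
    rewrite Rabs_left1 by lra. rewrite Rabs_left in Ht by lra. lra.
  - rewrite Heq. exact G0.
  - rewrite <- G0. symmetry. apply eq_is_derive; [|lra]. intros s Hs. apply HG.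
    rewrite Rabs_pos_eq by lra. rewrite Rabs_pos_eq in Ht by lra. lra. }
unfold G in Gt. unfold e_deg, Rpower.
set (x := / lam * ln (1 + lam * t)) in *.
replace (- / lam * ln (1 + lam * t)) with (- x) in Gt by (unfold x; ring).
rewrite <- (Rmult_1_l (exp x)). rewrite <- Gt. rewrite Rmult_assoc, <- exp_plus.
replace (- x + x) with 0 by ring. rewrite exp_0. ring.
Qed.

Lemma is_series_zero (a : nat -> R) : (forall n, a n = 0) -> is_series a 0.
Proof.
intros H. apply is_series_Reals. intros eps Heps. exists 0%nat. intros n _.
rewrite (sum_eq _ (fun _ => 0)) by (intros; apply H).
rewrite sum_cte. unfold R_dist. rewrite Rmult_0_l, Rminus_0_r, Rabs_R0. exact Heps.
Qed.

Lemma is_pseries_e1 t : is_pseries (fun n => if Nat.eqb n 1 then 1 else 0) t t.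
Proof.
apply is_pseries_R. apply is_series_decr_1. apply is_series_decr_1.
apply is_series_ext with (fun _ => 0).
- intros n. simpl. ring.
- match goal with |- is_series _ ?l => replace l with 0 end.
  + apply is_series_zero. reflexivity.
  + simpl. unfold plus, opp; simpl. ring.
Qed.

Lemma E_ne1 lam t : lam <> 0 -> t <> 0 -> 0 < 1 + lam * t -> e_deg lam t <> 1.
Proof.
intros Hl Ht Hp E. unfold e_deg, Rpower in E. apply (f_equal ln) in E. rewrite ln_exp, ln_1 in E.

assert (ln (1 + lam * t) = 0).
{ apply Rmult_eq_reg_l with (/ lam). rewrite E; ring. apply Rinv_neq_0_compat; exact Hl. }
rewrite <- ln_1 in H. apply ln_inv in H; [|lra|lra].
assert (lam * t = 0) by lra. apply Rmult_integral in H0. tauto.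
Qed.

Lemma A1 lam b1 b2 : lam <> 0 -> is_carlitz_bernoulli lam b1 -> is_carlitz_bernoulli (lam/2) b2 ->
  forall n, PS_mult (fun k => (b1 k - 2^k * b2 k) / INR (fact k)) (ea lam) n
     + (b1 n - 2^n * b2 n) / INR (fact n) = (if Nat.eqb n 1 then 1 else 0).
Proof.
intros Hl [d1 [Hd1 H1]] [d2 [Hd2 H2]].
set (cc := fun k => (b1 k - 2^k * b2 k) / INR (fact k)).
set (rho := / (1 + Rabs lam)).
assert (HM : 0 < 1 + Rabs lam) by (pose proof (Rabs_pos lam); lra).
assert (Hrho : 0 < rho) by (apply Rinv_0_lt_compat; lra).
set (d := Rmin d1 (Rmin (d2/2) rho)).
assert (Hd : 0 < d) by (unfold d; repeat apply Rmin_pos; lra).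
assert (Hdd1 : d <= d1) by apply Rmin_l.
assert (Hdd2 : d <= d2/2) by (eapply Rle_trans; [apply Rmin_r|apply Rmin_l]).
assert (Hdr : d <= rho) by (eapply Rle_trans; [apply Rmin_r|apply Rmin_r]).
assert (Hpos : forall u, Rabs u < rho -> 0 < 1 + lam * u).
{ intros u Hu.
  assert (Hh : Rabs (lam * u) < 1).
  { rewrite Rabs_mult.
    assert (Rabs lam * Rabs u <= Rabs lam * rho).
    { apply Rmult_le_compat_l. apply Rabs_pos. lra. }
    assert (Rabs lam * rho < 1).
    { apply Rmult_lt_reg_r with (1 + Rabs lam). lra.
      unfold rho. rewrite Rmult_assoc, Rinv_l by lra. lra. }
    lra. }
  pose proof (Rle_abs (- (lam * u))). rewrite Rabs_Ropp in H. lra. }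
assert (Hcc : forall t, 0 < Rabs t < d -> is_pseries cc t (t / (e_deg lam t + 1))).
{ intros t Ht.
  set (E := e_deg lam t).
  assert (HE1 : E <> 1).
  { apply E_ne1; auto. intro; subst; rewrite Rabs_R0 in Ht; lra. apply Hpos. lra. }
  assert (HE0 : 0 < E) by (unfold E, e_deg, Rpower; apply exp_pos).
  assert (HE2 : e_deg (lam / 2) (2 * t) = E * E).
  { unfold E, e_deg, Rpower. rewrite <- exp_plus. f_equal.
    replace (1 + lam / 2 * (2 * t)) with (1 + lam * t) by field.
    field. exact Hl. }
  pose proof (H1 t ltac:(lra)) as S1.
  assert (S2 : is_pseries (fun n => b2 n / INR (fact n)) (2 * t) (2 * t / (E * E - 1))).
  { rewrite <- HE2. apply H2. rewrite Rabs_mult, Rabs_pos_eq by lra. split; [|lra].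
    apply Rmult_lt_0_compat; lra. }
  apply is_pseries_R in S1. apply is_pseries_R in S2.
  apply is_pseries_R.
  pose proof (is_series_minus _ _ _ _ S1 S2) as S3.
  replace (t / (E + 1)) with (plus (t / (E - 1)) (opp (2 * t / (E * E - 1)))).
  - revert S3. apply is_series_ext. intros n. unfold plus, opp; simpl. unfold cc.
    rewrite Rpow_mult_distr. unfold Rdiv. ring.
  - unfold plus, opp; simpl. field. split; [lra|]. split; [|lra].
    intro Hc. assert ((E - 1) * (E + 1) = 0) by (rewrite <- Hc; ring).
    apply Rmult_integral in H. lra. }
assert (Hq : forall t, 0 < Rabs t < d -> is_pseries
   (fun n => PS_mult cc (ea lam) n + cc n - (if Nat.eqb n 1 then 1 else 0)) t 0).
{ intros t Ht.
  assert (Hea : is_pseries (ea lam) t (e_deg lam t)).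
  { rewrite <- ea_exp by (auto; unfold rho in Hdr; lra).
    apply PSeries_correct. apply CV_radius_inside.
    eapply Rbar_lt_le_trans; [|apply ea_radius]. simpl. unfold rho in Hdr. lra. }
  assert (Hr1 : Rbar_lt (Rabs t) (CV_radius cc)).
  { set (t' := (Rabs t + d) / 2).
    eapply Rbar_lt_le_trans with (Rabs t'); [|apply ex_radius; eexists; apply Hcc].
    - simpl. rewrite (Rabs_pos_eq t'); unfold t'; [lra|]. pose proof (Rabs_pos t). lra.
    - rewrite (Rabs_pos_eq t'); unfold t'; [|pose proof (Rabs_pos t); lra]. pose proof (Rabs_pos t). lra. }
  assert (Hr2 : Rbar_lt (Rabs t) (CV_radius (ea lam))).
  { eapply Rbar_lt_le_trans; [|apply ea_radius]. simpl. unfold rho in Hdr. lra. }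
  pose proof (is_pseries_mult _ _ _ _ _ (Hcc t Ht) Hea Hr1 Hr2) as M.
  pose proof (is_pseries_plus _ _ _ _ _ M (Hcc t Ht)) as P.
  pose proof (is_pseries_minus _ _ _ _ _ P (is_pseries_e1 t)) as Q.
  set (E := e_deg lam t) in *.
  assert (HE0 : 0 < E) by (unfold E, e_deg, Rpower; apply exp_pos).
  revert Q. match goal with |- is_pseries _ _ ?l -> _ => replace l with 0 end.
  2:{ unfold plus, opp; simpl. field. lra. }
  apply is_pseries_ext. intros n. unfold PS_minus, PS_plus, plus, opp; simpl. ring. }
intros n. apply Rminus_diag_uniq. 
exact (ps_unique _ d Hd Hq n).
Qed.

Lemma first_part (S : nat -> nat -> R) n :
  sum_f_R0 (fun k => S n k * (/ 2) ^ k * (-1) ^ k * INR (fact k)) n = W_deg S n (- (1 / 2)).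
Proof.
unfold W_deg. apply sum_eq. intros k _.
replace (- (1 / 2)) with (/ 2 * -1) by field.
rewrite Rpow_mult_distr. ring.
Qed.

From mathcomp Require all_boot all_algebra Rstruct ring.

Module MC.
Import all_boot all_algebra Rstruct ring.
Section MC.
Import GRing.Theory Num.Theory.
Local Open Scope ring_scope.
Arguments dfall : simpl never.

Lemma dfallS lam x k : dfall lam x k.+1 = dfall lam x k * (x - k%:R * lam).
Proof. by rewrite /dfall -/dfall INRE. Qed.
Lemma dfall0 lam x : dfall lam x 0 = 1.
Proof. by []. Qed.

Lemma ff_nat n k : falling n%:R k = (n ^_ k)%:R.
Proof.
rewrite /falling; elim: k => [|k IH]; first by rewrite ffactn0.
rewrite dfallS IH ffactnSr natrM mulr1.
case: (leqP k n) => hk; first by rewrite natrB.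
by rewrite ffact_small // mul0r mul0r.
Qed.

Lemma ff_uniq N (al : nat -> R) :
  (forall x, \sum_(k < N) al k * falling x k = 0) -> forall k, (k < N)%N -> al k = 0.
Proof.
move=> H; elim/ltn_ind => i IH hi.
have := H i%:R.
rewrite (bigD1 (Ordinal hi)) //= big1.
  rewrite addr0 ff_nat ffactnn => /eqP; rewrite mulf_eq0 pnatr_eq0 (negbTE (lt0n_neq0 (fact_gt0 i))) orbF.
  by move/eqP.
move=> j hj; case: (ltngtP j i) => hji.
- by rewrite IH ?mul0r // (ltn_trans hji hi).
- by rewrite ff_nat ffact_small // mulr0.
- by move: hj; rewrite -val_eqE /= hji eqxx.
Qed.
Lemma vander lam x y m : dfall lam (x + y) m =
  \sum_(j < m.+1) 'C(m, j)%:R * dfall lam x j * dfall lam y (m - j).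
Proof.
elim: m => [|m IH].
  by rewrite big_ord1 /= !mul1r.
rewrite dfallS IH big_distrl /=.
have E : forall j : 'I_m.+1, 'C(m, j)%:R * dfall lam x j * dfall lam y (m - j) * (x + y - m%:R * lam)
   = 'C(m, j)%:R * dfall lam x j.+1 * dfall lam y (m - j) + 'C(m, j)%:R * dfall lam x j * dfall lam y (m.+1 - j).
  move=> j; have hj := ltn_ord j.
  rewrite !dfallS subSn // dfallS natrB //. ring.
rewrite (eq_bigr _ (fun j _ => E j)) big_split /=.
rewrite [in RHS]big_ord_recl /= bin0 subn0 mul1r.
under [in RHS]eq_bigr => j _ do rewrite binS natrD !mulrDl.
rewrite big_split /= [X in _ = _ + X]addrC addrCA; congr (_ + _).
rewrite [LHS](_ : _ = \sum_(i < m.+2) 'C(m, i)%:R * dfall lam x i * dfall lam y (m.+1 - i)); last first.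
  by rewrite [RHS]big_ord_recr /= bin_small // !mul0r addr0.
rewrite big_ord_recl bin0 subn0 mul1r; congr (_ + _).
Qed.
Lemma ffS1' x k : falling (x + 1) k = falling x k + k%:R * falling x k.-1.
Proof.
rewrite /falling; case: k => [|k]; first by rewrite !dfall0 mul0r addr0.
elim: k => [|k IH].
  rewrite !dfallS !dfall0 ?RplusE ?R1E; ring.
rewrite dfallS IH !dfallS !mulr1 /=.
rewrite ?RplusE ?R1E -!natr1; ring.
Qed.

Section Comb.
Variables (lam : R) (S : nat -> nat -> R).
Hypothesis hS : forall n x, dfall lam x n = \sum_(k < n.+1) S n k * falling x k.

Definition S' j k := if (k <= j)%N then S j k else 0.
Definition dd n := dfall lam 1 n.

Lemma hS' N n x : (n < N)%N -> dfall lam x n = \sum_(k < N) S' n k * falling x k.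
Proof.
move=> hn; rewrite hS (big_ord_widen N (fun k => S n k * falling x k)) // big_mkcond.
by apply: eq_bigr => k _; rewrite /S' ltnS; case: ifP => // _; rewrite mul0r.
Qed.

Lemma keyI m k : (k <= m)%N ->
  \sum_(j < m.+1) 'C(m, j)%:R * dd (m - j) * S' j k = S' m k + k.+1%:R * S' m k.+1.
Proof.
move=> hk; apply/eqP; rewrite -subr_eq0; apply/eqP.
pose al k := \sum_(j < m.+1) 'C(m, j)%:R * dd (m - j) * S' j k - (S' m k + k.+1%:R * S' m k.+1).
apply: (@ff_uniq m.+1 al) => // x.
rewrite /al.
under eq_bigr => i _ do rewrite mulrBl.
rewrite sumrB; apply/eqP; rewrite subr_eq0; apply/eqP.
transitivity (dfall lam (x + 1) m).
  rewrite vander.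
  under eq_bigr => i _ do rewrite big_distrl /=.
  rewrite exchange_big /=; apply: eq_bigr => j _.
  rewrite (@hS' m.+1 j x (ltn_ord j)) big_distrr /=.
  by rewrite big_distrl /=; apply: eq_bigr => i _; rewrite /dd; ring.
rewrite (@hS' m.+1 m) //.
under eq_bigr => i _ do rewrite ffS1' mulrDr.
under [in RHS]eq_bigr => i _ do rewrite mulrDl.
rewrite !big_split /=; congr (_ + _).
rewrite big_ord_recl /= mul0r mulr0 add0r.
rewrite [RHS]big_ord_recr /= /S' ltnn mulr0 mul0r addr0.
apply: eq_bigr => i _; rewrite /bump /= add1n /=.
case: ifP => _; ring.
Qed.

Lemma Sm0 m : S m 0 = (m == 0%N)%:R.
Proof.
have := hS m 0; rewrite big_ord_recl big1; last first.
  by move=> i _; have := ff_nat 0 (lift ord0 i); rewrite ffact_small // => ->; rewrite mulr0.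
rewrite addr0 /falling dfall0 mulr1 => <-.
case: m => [|m]; first by rewrite dfall0.
elim: m => [|m IH]; first by rewrite dfallS dfall0 mul0r subrr mulr0.
by rewrite dfallS IH mul0r.
Qed.

Definition Wm j (x : R) := \sum_(k < j.+1) S j k * k`!%:R * x ^+ k.

Lemma Wrec m x :
  \sum_(j < m.+1) 'C(m, j)%:R * Wm j x * dd (m - j) * x = Wm m x * (1 + x) - (m == 0%N)%:R.
Proof.
have hW : forall j, (j <= m)%N -> Wm j x = \sum_(k < m.+1) S' j k * k`!%:R * x ^+ k.
  move=> j hj; rewrite /Wm (big_ord_widen m.+1 (fun k => S j k * k`!%:R * x ^+ k)) // big_mkcond.
  by apply: eq_bigr => k _; rewrite /S' ltnS; case: ifP => // _; rewrite !mul0r.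
pose f k := S' m k * k`!%:R * x ^+ k.
transitivity (\sum_(k < m.+1) (x * f k + f k.+1)).
  under eq_bigr => j _ do rewrite (hW j (ltn_ord j)) mulr_sumr !mulr_suml.
  rewrite exchange_big /=; apply: eq_bigr => k _.
  have hk : (k <= m)%N by rewrite -ltnS.
  rewrite /f (_ : _ + _ = k`!%:R * x ^+ k.+1 * (S' m k + k.+1%:R * S' m k.+1)); last first.
    by rewrite factS natrM exprS; ring.
  rewrite -(@keyI m k hk) mulr_sumr.
  by apply: eq_bigr => j _; rewrite exprS; ring.
rewrite big_split /= -mulr_sumr.
have E1 : \sum_(k < m.+2) f k = f 0%N + \sum_(k < m.+1) f k.+1 by rewrite big_ord_recl.
have E2 : \sum_(k < m.+2) f k = \sum_(k < m.+1) f k by rewrite big_ord_recr /= /f /S' ltnn !mul0r addr0.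
have E3 : f 0%N = (m == 0%N)%:R by rewrite /f /S' leq0n Sm0 expr0 !mulr1.
have E4 : \sum_(k < m.+1) f k.+1 = Wm m x - (m == 0%N)%:R.
  by rewrite (hW m (leqnn m)) -E2 E1 E3; ring.
by rewrite E4 (hW m (leqnn m)); ring.
Qed.

Definition mhalf : R := - 2^-1.

Lemma C1 m : \sum_(j < m.+1) 'C(m, j)%:R * Wm j mhalf * dd (m - j) + Wm m mhalf
  = 2 * (m == 0%N)%:R.
Proof.
move: (Wrec m mhalf); rewrite -mulr_suml.
move: (\sum_(j < m.+1) _) (Wm m _) ((m == 0%N)%:R) => T W d h.
rewrite (_ : T = -2 * (T * - 2^-1)); last by rewrite ?RoppE; field.
by rewrite h /mhalf ?RoppE; field.
Qed.

Lemma final (c : nat -> R)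
  (hc : forall n, \sum_(k < n.+1) 'C(n, k)%:R * c k * dd (n - k) + c n = (n == 1%N)%:R) :
  forall n, c n.+1 = n.+1%:R / 2 * Wm n mhalf.
Proof.
have c0 : c 0%N = 0.
  have := hc 0%N; rewrite big_ord1 bin0 subnn /dd dfall0 mul1r mulr1 /= => h.
  have : c 0%N + c 0%N = 0 by rewrite h.
  by move/eqP; rewrite -mulr2n mulrn_eq0 /= => /eqP.
elim/ltn_ind => n IH.
have h := hc n.+1.
rewrite big_ord_recl /= c0 mulr0 mul0r add0r in h.
rewrite big_ord_recr /= binn subnn /dd dfall0 mul1r mulr1 in h.
have h2 := C1 n.
rewrite big_ord_recr /= binn subnn /dd dfall0 mul1r mulr1 in h2.
set T := \sum_(i < n) _ in h.
set T2 := \sum_(i < n) _ in h2.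
have ET : T = n.+1%:R / 2 * T2.
  rewrite /T /T2 mulr_sumr; apply: eq_bigr => i _.
  rewrite /bump /= add1n subSS IH //.
  have hb := mul_bin_diag n.+1 i.
  rewrite (_ : 'C(n.+1, i.+1)%:R = n.+1%:R * 'C(n, i)%:R / i.+1%:R :> R).
    by rewrite /dd; field; rewrite addrC natr1 pnatr_eq0.
  have hb' : (i.+1%:R * 'C(n.+1, i.+1)%:R = n.+1%:R * 'C(n, i)%:R :> R) by rewrite -!natrM -hb.
  by rewrite -hb'; field; rewrite addrC natr1 pnatr_eq0.
rewrite ET in h.
set W := Wm n _ in h2 *.
have nd : n%:R * (n == 0%N)%:R = 0 :> R by case: (n) => [|k]; rewrite ?mul0r //= mulr0.
move: h h2 nd; rewrite /bump /= add1n.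
move: (n == 0%N)%:R => dl h h2 nd.
have hc2 : c n.+1 = (dl - n.+1%:R/2 * T2) / 2.
  by rewrite -h; field.
have hT2 : T2 = 2 * dl - W - W by rewrite -h2; ring.
rewrite hc2 hT2.
transitivity ((-(n%:R * dl) + n.+1%:R * W) / 2); last by rewrite nd; field.
by rewrite -!natr1; field.
Qed.

End Comb.


Lemma bridge lam (c : nat -> R)
  (hA : forall n, PS_mult (fun k => c k / INR (fact k)) (ea lam) n + c n / INR (fact n)
          = (if Nat.eqb n 1 then 1 else 0)%R) :
  forall n, \sum_(k < n.+1) 'C(n, k)%:R * c k * dd lam (n - k) + c n = (n == 1%N)%:R.
Proof.
move=> n; have h := hA n.
rewrite /PS_mult /ea ?RealsE big_mkord in h.
have e : forall k : 'I_n.+1, 'C(n, k)%:R * c k * dd lam (n - k) =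
   n`!%:R * ((c k / INR (fact k))%R * (dfall lam 1 (n - k)%coq_nat / INR (fact (n - k)%coq_nat)))%R.
  move=> k; have hk : (k <= n)%N by rewrite -ltnS.
  have hb := bin_fact hk.
  rewrite !INRE !factE /dd -hb !natrM.
  have h1 : (k`!%:R != 0 :> R) by rewrite pnatr_eq0 -lt0n fact_gt0.
  have h2 : ((n - k)`!%:R != 0 :> R) by rewrite pnatr_eq0 -lt0n fact_gt0.
  rewrite (_ : (n - k)%coq_nat = (n - k)%N) //.
  by rewrite /Rdiv ?RmultE ?RinvE; field; apply/andP; split.
rewrite (eq_bigr _ (fun k _ => e k)) -mulr_sumr.
move: h; set X := \sum_(i < n.+1) _ => h.
have hX : X = (if (n =? 1)%nat then 1 else 0) - c n / n`!%:R by rewrite -h; ring.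
rewrite hX.
have h3 : (n`!%:R != 0 :> R) by rewrite pnatr_eq0 -lt0n fact_gt0.
case: n {e X h hX} h3 => [|[|n]] h3 /=.
- by move: h3; rewrite ?R0E ?R1E; move: (_`!%:R) => F hF; field.
- by move: h3; rewrite ?R0E ?R1E; move: (_`!%:R) => F hF; field.
- by move: h3; rewrite ?R0E ?R1E; move: (_`!%:R) => F hF; field.
Qed.

Lemma stir_conv lam S : is_deg_stirling2 lam S ->
  forall n x, dfall lam x n = \sum_(k < n.+1) S n k * falling x k.
Proof. by move=> H n x; rewrite H RealsE big_mkord. Qed.

Lemma W_conv S n : W_deg S n (Ropp (Rdiv (IZR 1) (IZR 2))) = Wm S n mhalf.
Proof.
rewrite /W_deg /Wm RealsE big_mkord; apply: eq_bigr => k _.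
rewrite INRE factE RpowE /mhalf RoppE RdivE R1E IZRposE INRE /=.
by rewrite mul1r.
Qed.

Lemma fin2 (W C : R) n : C = n.+1%:R / 2 * W ->
  W = Rmult (Rdiv (IZR 2) (Rplus (INR n) (IZR 1))) C.
Proof.
move=> ->; rewrite RmultE RdivE RplusE INRE R1E IZRposE INRE /=.
have hn : (n%:R + 1 != 0 :> R) by rewrite natr1 pnatr_eq0.
rewrite -natr1; field; rewrite hn //.
Qed.

Lemma main_mc lam S (c : nat -> R) : is_deg_stirling2 lam S ->
  (forall n, PS_mult (fun k => c k / INR (fact k)) (ea lam) n + c n / INR (fact n)
          = (if Nat.eqb n 1 then 1 else 0)%R) ->
  forall n, c n.+1 = n.+1%:R / 2 * Wm S n mhalf.
Proof.
move=> HS hA n; apply: (@final lam S (@stir_conv lam S HS) c); exact: (@bridge lam c hA).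
Qed.

End MC.
End MC.

Open Scope R_scope.

Theorem theorem8 (lam : R) (S : nat -> nat -> R) (b1 b2 : nat -> R) :
  lam <> 0 ->
  is_deg_stirling2 lam S ->
  is_carlitz_bernoulli lam b1 ->
  is_carlitz_bernoulli (lam / 2) b2 ->
  forall n : nat,
    sum_f_R0 (fun k => S n k * (/ 2) ^ k * (-1) ^ k * INR (fact k)) n
      = W_deg S n (- (1 / 2))
    /\ W_deg S n (- (1 / 2))
      = 2 / (INR n + 1) * (b1 (n + 1)%nat - 2 ^ (n + 1) * b2 (n + 1)%nat).
Proof.
intros Hl HS Hb1 Hb2 n. split.
- apply first_part.
- rewrite MC.W_conv. apply MC.fin2.
  rewrite Nat.add_1_r.
  exact (MC.main_mc lam S (fun k => b1 k - 2 ^ k * b2 k) HS (A1 lam b1 b2 Hl Hb1 Hb2) n).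
Qed.
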